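(* Let $k$ be a field of prime characteristic $p$. Let $H_1=\{x_1^p\}^S$ and $S^{(p)}_1=\{S^{(p)}\}^S$, where $S^{(p)}=S^{(p)}(x_1,\ldots,x_p)=\sum_{\sigma\in\Sigma_p}\prod_{i=1}^p x_{\sigma(i)}$. Then $S^{(p)}_1\subseteq H_1$.
   Context: $X=\{x_1,x_2,\ldots\}$ is countably infinite; $k_0\langle X\rangle$ is the free associative (non-unital) $k$-algebra on $X$. A $T$-space is a $k$-subspace of $k_0\langle X\rangle$ invariant under every algebra endomorphism of $k_0\langle X\rangle$; $\{f\}^S$ is the $T$-space generated by $f$. $\Sigma_p$ is the symmetric group on $p$ letters. *)

(* Defs.v *)
From HB Require Import structures.
From mathcomp Require Import all_boot all_order all_algebra all_fingroup.
From mathcomp.multinomials Require Import monalg.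
Set Implicit Arguments. Unset Strict Implicit. Unset Printing Implicit Defensive.
Import GRing.Theory.
Local Open Scope ring_scope.

(* The free unital associative algebra k<X> on X = {x_i | i : nat}:
   the monoid algebra of the free monoid {fmonom nat} (words in nat). *)
Definition fralg (k : fieldType) := {malg k[{fmonom nat}]}.

Definition xvar (k : fieldType) (i : nat) : fralg k := << FMonom [:: i] >>.

Definition in_k0 (k : fieldType) (f : fralg k) : Prop := f@_(FMonom [::]) = 0.

(* k-subspace of k_0<X> (as a predicate on k<X> contained in k_0<X>). *)
Definition is_subspace (k : fieldType) (V : fralg k -> Prop) : Prop :=
  [/\ forall u, V u -> in_k0 u,
      V 0 &
      forall (c : k) u v, V u -> V v -> V (c *: u + v)].

(* Algebra endomorphism of k_0<X>: a map defined (at least) on k_0<X>,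
   preserving k_0<X>, k-linear and multiplicative there; its values
   outside k_0<X> are irrelevant. *)
Definition is_endo (k : fieldType) (phi : fralg k -> fralg k) : Prop :=
  [/\ forall u, in_k0 u -> in_k0 (phi u),
      forall (c : k) u v, in_k0 u -> in_k0 v -> phi (c *: u + v) = c *: phi u + phi v &
      forall u v, in_k0 u -> in_k0 v -> phi (u * v) = phi u * phi v].

Definition is_Tspace (k : fieldType) (V : fralg k -> Prop) : Prop :=
  is_subspace V /\ forall phi, is_endo phi -> forall u, V u -> V (phi u).

Definition Tgen (k : fieldType) (f : fralg k) : fralg k -> Prop :=
  fun v => forall V, is_Tspace V -> V f -> V v.

Definition Sp (k : fieldType) (p : nat) : fralg k :=
  \sum_(s : 'S_p) \prod_(i < p) xvar k (s i).+1.

(* Main.v *)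
Require Import Defs.
From HB Require Import structures.
From mathcomp Require Import all_boot all_order all_algebra all_fingroup.
From mathcomp Require Import finmap.
From mathcomp.multinomials Require Import monalg.
Set Implicit Arguments. Unset Strict Implicit. Unset Printing Implicit Defensive.
Import GRing.Theory.
Local Open Scope ring_scope.
Section S.

Variable k : fieldType.
Implicit Types (g : fralg k) (c : k).

Lemma malgC_commr c g : g * c%:MP = c%:MP * g.
Proof.
apply/malgP=> m.
rewrite (@mcoeffMrw _ _ (msupp g) [fset (mone : {fmonom nat})]%fset) ?msuppC_le //.
rewrite (@mcoeffMlw _ _ [fset (mone : {fmonom nat})]%fset (msupp g)) ?msuppC_le //.
rewrite !big_seq_fset1 /=.
apply: eq_bigr => m1 _.
by rewrite monalg.mulm1 monalg.mul1m mulrC.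
Qed.

Definition hmap (a : nat -> fralg k) (m : {fmonom nat}) : fralg k :=
  \prod_(i <- fmonom_val m) a i.

Lemma hmap_mm a : mmorphism (hmap a).
Proof.
split; last by rewrite /hmap fm1 big_nil.
by move=> x y; rewrite /hmap fmM big_cat.
Qed.

HB.instance Definition _ a := isMultiplicative.Build _ _ (hmap a) (hmap_mm a).

Definition phi a : fralg k -> fralg k := mmap (@malgC _ k) (hmap a).

Lemma phi_mult a : multiplicative (phi a).
Proof.
apply: commr_mmap_is_multiplicative => g m m'.
by rewrite /GRing.comm malgC_commr.
Qed.

Lemma phiM a u v : phi a (u * v) = phi a u * phi a v.
Proof. by case: (phi_mult a) => ->. Qed.
Lemma phi1 a : phi a 1 = 1.
Proof. by case: (phi_mult a). Qed.
Lemma phiX a u n : phi a (u ^+ n) = phi a u ^+ n.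
Proof. elim: n => [|n IH]; first by rewrite !expr0 phi1. by rewrite !exprS phiM IH. Qed.
Lemma phiD a u v : phi a (u + v) = phi a u + phi a v.
Proof. exact: mmapD. Qed.
Lemma phiZ a c u : phi a (c *: u) = c *: phi a u.
Proof. by rewrite /phi mmapZ mul_malgC. Qed.
Lemma phi_x a i : phi a (xvar k i) = a i.
Proof. rewrite /phi /xvar mmapU [X in X * _](_ : _ = 1) ?mul1r ?/hmap ?big_seq1 //. Qed.

Lemma mone_fm : (mone : {fmonom nat}) = FMonom [::].
Proof. by rewrite /mone /one /= fmoneE. Qed.

Lemma eps_hmap a m : (forall i, (a i)@_mone = 0) ->
  (hmap a m)@_mone = (m == mone)%:R.
Proof.
move=> a0; rewrite /hmap (rmorph_prod (@mcoeff _ k mone)).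
case: m => [[|i s]] /=.
  by rewrite big_nil mone_fm eqxx.
rewrite big_cons a0 mul0r mone_fm.
by case: eqP => // -[].
Qed.

Lemma eps_phi a g : (forall i, (a i)@_mone = 0) ->
  (phi a g)@_mone = g@_mone.
Proof.
move=> a0; rewrite /phi mmapE raddf_sum /=.
rewrite [in RHS](monalgE g) raddf_sum /=.
apply: eq_bigr => m _; rewrite mcoeffCM eps_hmap // mcoeffU mulr_natr.
by rewrite eq_sym.
Qed.
End S.

Section Comb.
Variable R : ringType.

Lemma alt_sum n (A : {set 'I_n}) :
  \sum_(J : {set 'I_n} | A \subset J) ((-1) ^+ (n - #|J|) : R) = (A == setT)%:R.
Proof.
case: (A =P setT) => [->|/eqP neA].
  rewrite (big_pred1 setT) ?cardsT ?card_ord ?subnn ?expr0 // => J.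
  by rewrite subTset.
rewrite eqEsubset subsetT /= in neA.
case/subsetPn: neA => j _ jA.
rewrite (bigID [pred J : {set 'I_n} | j \in J]) /=.
rewrite (reindex_onto (fun J => j |: J) (fun J => J :\ j)); last first.
  by move=> J /andP[_ jJ]; rewrite setD1K.
rewrite -[X in _ + X]opprK; apply/eqP; rewrite subr_eq0; apply/eqP.
rewrite -sumrN; apply: eq_big => [J|J /andP[AJ jJ]].
  rewrite setU11 andbT; case jJ: (j \in J); rewrite /= ?andbF.
    apply/negbTE/negP => /andP[_ /eqP E].
    by move: jJ; rewrite -E setD11.
  rewrite setU1K ?jJ // eqxx !andbT.
  apply/subsetP/subsetP => H x xA; have := H x xA.
    by case/setU1P => // xj; move: jA; rewrite -xj xA.
  by move=> xJ; apply/setU1P; right.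
have jJ' : j \notin J by rewrite -(eqP jJ) setD11.
have le : (#|j |: J| <= n)%N by apply: leq_trans (max_card _) _; rewrite card_ord.
move: le; rewrite cardsU1 jJ' add1n => le.
by rewrite -(subnSK le) exprS mulN1r opprK.
Qed.


Lemma ffun_on_image n (f : {ffun 'I_n -> 'I_n}) (J : {set 'I_n}) :
  (f \in ffun_on (fun j => j \in J)) = ([set f i | i : 'I_n] \subset J).
Proof.
apply/ffun_onP/subsetP => [H x /imsetP[i _ ->]|H x]; first exact: H.
by apply: H; apply: imset_f.
Qed.

Lemma image_setT n (f : {ffun 'I_n -> 'I_n}) :
  ([set f i | i : 'I_n] == setT) = injectiveb f.
Proof.
rewrite eqEcard subsetT cardsT card_ord /=.
apply/idP/injectiveP => [H | inj]; last by rewrite card_imset // card_ord.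
have E : #|[set f i | i : 'I_n]| == #|'I_n|.
  by rewrite eqn_leq leq_imset_card card_ord H.
by move/imset_injP: E => inj x z; apply: inj.
Qed.

Lemma polar n (y : 'I_n -> R) :
  \sum_(J : {set 'I_n}) (-1) ^+ (n - #|J|) * (\sum_(j in J) y j) ^+ n
  = \sum_(s : 'S_n) \prod_(i < n) y (s i).
Proof.
have cst (x : R) : x ^+ n = \prod_(i < n) x by rewrite prodr_const card_ord.
under eq_bigr => J _.
  rewrite cst bigA_distr_big mulr_sumr big_mkcond /=.
  over.
rewrite exchange_big /=.
under eq_bigr => f _.
  under eq_bigr => J _ do rewrite ffun_on_image.
  rewrite -big_mkcond /= -mulr_suml alt_sum image_setT.
  over.
rewrite (bigID [pred f : {ffun 'I_n -> 'I_n} | injectiveb f]) /=.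
rewrite [X in _ + X]big1 ?addr0 => [|f /negbTE ->]; last by rewrite mul0r.
under eq_bigr => f -> do rewrite mul1r.
rewrite (reindex_onto (fun s : 'S_n => pval s) (fun f => insubd (1%g : 'S_n) f)) /=.
  apply: eq_big => [s|s _]; last by rewrite pvalE.
  by rewrite -[pval s]/(val s) valKd eqxx (valP s).
by move=> f inj; rewrite insubdK.
Qed.
End Comb.

Lemma xvar_k0 (k : fieldType) i : (xvar k i)@_mone = 0.
Proof. by rewrite /xvar mcoeffU mone_fm. Qed.

Lemma phi_endo (k : fieldType) (a : nat -> fralg k) :
  (forall i, (a i)@_mone = 0) -> is_endo (phi a).
Proof.
move=> a0; split.
- by move=> u; rewrite /in_k0 -mone_fm eps_phi.
- by move=> c u v _ _; rewrite phiD phiZ.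
- by move=> u v _ _; rewrite phiM.
Qed.

Lemma sub_sum (k : fieldType) (V : fralg k -> Prop) (I : Type) (r : seq I)
  (c : I -> k) (F : I -> fralg k) :
  is_subspace V -> (forall i, V (F i)) -> V (\sum_(i <- r) c i *: F i).
Proof.
move=> [_ V0 VD] VF; elim/big_rec: _ => // i x _ Vx; exact: VD.
Qed.

Lemma sign_scale (k : fieldType) m (u : fralg k) :
  (-1) ^+ m * u = ((-1) ^+ m : k) *: u.
Proof.
elim: m => [|m IH]; first by rewrite !expr0 mul1r scale1r.
by rewrite !exprS mulN1r mulNr IH -scaleNr mulN1r.
Qed.

Theorem corollary4p1 (k : fieldType) (p : nat) :
  prime p -> p \in [pchar k] ->
  forall v : fralg k, Tgen (Sp k p) v -> Tgen (xvar k 1 ^+ p) v.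
Proof.
move=> _ _ v Hv V TV Vx; apply: Hv => //.
have [SV TVphi] := TV.
pose a (J : {set 'I_p}) (i : nat) : fralg k :=
  if i == 1%N then \sum_(j in J) xvar k j.+1 else xvar k i.
have a0 J i : (a J i)@_mone = 0.
  rewrite /a; case: eqP => _; last exact: xvar_k0.
  by rewrite raddf_sum big1 // => j _; exact: xvar_k0.
have -> : Sp k p = \sum_(J : {set 'I_p}) ((-1) ^+ (p - #|J|) : k) *:
            phi (a J) (xvar k 1 ^+ p).
  rewrite /Sp -(polar (fun j : 'I_p => xvar k j.+1)).
  apply: eq_bigr => J _; rewrite sign_scale phiX phi_x /a eqxx //.
apply: sub_sum => // J; apply: TVphi => //; exact: phi_endo.
Qed.
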